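(* Let $\Gamma$ be a subalgebra of the $\Bbbk$-algebra $A$ and let $\sim$ be the equivalence relation on $\mathrm{cfs}(\Gamma)$ generated by $\mathfrak m\sim\mathfrak n$ whenever $\mathrm{Ext}^1_\Gamma(S_{\mathfrak m},S_{\mathfrak n})\ne0$. If $\Gamma$ is quasinoetherian with respect to $\sim$ and $\Gamma$ is quasicentral in $A$, then $\Gamma$ is a Harish-Chandra block subalgebra of $A$ with respect to $\sim$.
   Context: $\mathrm{cfs}(\Gamma)$: maximal two-sided ideals $\mathfrak m$ of $\Gamma$ with $\dim\Gamma/\mathfrak m<\infty$; $S_{\mathfrak m}$ the unique simple $\Gamma/\mathfrak m$-module. For a class $B$, $\mathcal W(B)=\{\mathfrak m_1\cdots\mathfrak m_k:k\ge0,\mathfrak m_i\in B\}$; for a $\Gamma$-module $V$, $V(B)=\{v:\mathfrak mv=0$ for some $\mathfrak m\in\mathcal W(B)\}$; $V$ is a block module if $V=\bigoplus_BV(B)$. $\Gamma$ is quasinoetherian w.r.t. $\sim$ if $\Gamma/\mathfrak m$ is finite-dimensional for every class $B$ and $\mathfrak m\in\mathcal W(B)$. $\Gamma$ is quasicentral in $A$ if $\Gamma a\Gamma$ is finitely generated as a left and as a right $\Gamma$-module for every $a\in A$. $\Gamma$ is a Harish-Chandra block subalgebra of $A$ w.r.t. $\sim$ if $A/A\mathfrak m$ is a block module over $\Gamma$ for every $B$ and $\mathfrak m\in\mathcal W(B)$. *)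

(* Defs.v *)
From HB Require Import structures.
From mathcomp Require Import all_boot all_algebra.
From mathcomp Require Import boolp classical_sets.
From Stdlib Require Import Relations.
Set Implicit Arguments. Unset Strict Implicit. Unset Printing Implicit Defensive.
Import GRing.Theory.
Local Open Scope ring_scope.
Local Open Scope classical_set_scope.

Section Defs.
Variables (k : fieldType) (G : algType k).

Definition two_sided_ideal (I : set G) : Prop :=
  I 0 /\ (forall x y, I x -> I y -> I (x + y)) /\ (forall x, I x -> I (- x)) /\
  (forall g x, I x -> I (g * x)) /\ (forall g x, I x -> I (x * g)).

Definition fin_codim (I : set G) : Prop :=
  exists n (e : 'I_n -> G), forall x, exists c : 'I_n -> k,
    I (x - \sum_(i < n) c i *: e i).

Definition maximal_ideal (I : set G) : Prop :=
  two_sided_ideal I /\ I <> setT /\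
  forall J, two_sided_ideal J -> I `<=` J -> J = I \/ J = setT.

Definition cfs : set (set G) := [set m | maximal_ideal m /\ fin_codim m].

Definition ideal_mul (I J : set G) : set G :=
  [set z | exists n (x y : 'I_n -> G),
     (forall i, I (x i) /\ J (y i)) /\ z = \sum_(i < n) x i * y i].

Definition ideal_prod (s : seq (set G)) : set G := foldr ideal_mul setT s.

Fixpoint all_in (B : set (set G)) (s : seq (set G)) : Prop :=
  match s with [::] => True | J0 :: s' => B J0 /\ all_in B s' end.

Definition W (B : set (set G)) : set (set G) :=
  [set m | exists s, all_in B s /\ m = ideal_prod s].

Record gmod := GMod {
  gcar :> lmodType k;
  gact : G -> gcar -> gcar;
  gact_addl : forall x y v, gact (x + y) v = gact x v + gact y v;
  gact_addr : forall x v w, gact x (v + w) = gact x v + gact x w;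
  gact_scalel : forall (c : k) x v, gact (c *: x) v = c *: gact x v;
  gact_scaler : forall (c : k) x v, gact x (c *: v) = c *: gact x v;
  gact1 : forall v, gact 1 v = v;
  gactM : forall x y v, gact (x * y) v = gact x (gact y v)
}.

Definition submodule (M : gmod) (N : set M) : Prop :=
  N 0 /\ (forall v w, N v -> N w -> N (v + w)) /\
  (forall (c : k) v, N v -> N (c *: v)) /\
  (forall x v, N v -> N (gact x v)).

Definition simple_module (M : gmod) : Prop :=
  (exists v : M, v <> 0) /\
  forall N : set M, @submodule M N -> N = [set 0] \/ N = setT.

Definition annihilates (I : set G) (M : gmod) : Prop :=
  forall x (v : M), I x -> gact x v = 0.

Definition ghom (M N : gmod) (h : M -> N) : Prop :=
  (forall v w, h (v + w) = h v + h w) /\ (forall (c : k) v, h (c *: v) = c *: h v) /\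
  (forall x v, h (gact x v) = gact x (h v)).

(* Ext^1_G(S, T) <> 0 : there is a non-split short exact sequence
   0 -> T -> E -> S -> 0 of G-modules (Yoneda description of Ext^1). *)
Definition Ext1_nonzero (S T : gmod) : Prop :=
  exists (E : gmod) (i : T -> E) (p : E -> S),
    ghom i /\ ghom p /\ injective i /\ (forall s, exists e, p e = s) /\
    (forall e, p e = 0 <-> exists t, i t = e) /\
    ~ (exists s : S -> E, ghom s /\ forall v, p (s v) = v).

(* S is (a copy of) the unique simple G/m-module S_m *)
Definition is_S (m : set G) (S : gmod) : Prop := simple_module S /\ annihilates m S.

Definition ext_rel (m n : set G) : Prop :=
  cfs m /\ cfs n /\ exists S T : gmod, is_S m S /\ is_S n T /\ Ext1_nonzero S T.

Definition ext_sim : relation (set G) := clos_refl_sym_trans _ ext_rel.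

Definition ext_class (B : set (set G)) : Prop :=
  exists m, cfs m /\ B = [set n | cfs n /\ ext_sim m n].

Definition quasinoetherian : Prop :=
  forall B m, ext_class B -> W B m -> fin_codim m.

End Defs.

Section Sub.
Variables (k : fieldType) (G A : algType k) (f : {lrmorphism G -> A}).

Definition GaG (a : A) : set A :=
  [set z | exists n (g h : 'I_n -> G), z = \sum_(i < n) f (g i) * a * f (h i)].

Definition fg_left (X : set A) : Prop :=
  exists n (e : 'I_n -> A), (forall i, X (e i)) /\
    forall z, X z -> exists c : 'I_n -> G, z = \sum_(i < n) f (c i) * e i.

Definition fg_right (X : set A) : Prop :=
  exists n (e : 'I_n -> A), (forall i, X (e i)) /\
    forall z, X z -> exists c : 'I_n -> G, z = \sum_(i < n) e i * f (c i).

Definition quasicentral : Prop := forall a, fg_left (GaG a) /\ fg_right (GaG a).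

Definition Aideal (m : set G) : set A :=
  [set z | exists n (a : 'I_n -> A) (x : 'I_n -> G),
     (forall i, m (x i)) /\ z = \sum_(i < n) a i * f (x i)].

(* For the G-module A/N (G acting by left multiplication through f):
   the component (A/N)(B) = { v | m' v = 0 in A/N for some m' in W(B) } *)
Definition quot_part (N : set A) (B : set (set G)) : set A :=
  [set v | exists m', W B m' /\ forall x, m' x -> N (f x * v)].

(* A/N = \bigoplus_B (A/N)(B), written out on representatives modulo N *)
Definition block_quot (N : set A) : Prop :=
  (forall v, exists n (Bs : 'I_n -> set (set G)) (vs : 'I_n -> A),
      (forall i, ext_class (Bs i) /\ quot_part N (Bs i) (vs i)) /\
      N (v - \sum_(i < n) vs i)) /\
  (forall n (Bs : 'I_n -> set (set G)) (vs : 'I_n -> A),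
      (forall i, ext_class (Bs i) /\ quot_part N (Bs i) (vs i)) ->
      (forall i j, i != j -> Bs i <> Bs j) ->
      N (\sum_(i < n) vs i) -> forall i, N (vs i)).

Definition HC_block_subalgebra : Prop :=
  forall B m, ext_class B -> W B m -> block_quot (Aideal m).

End Sub.

(* Main.v *)
Require Import Defs.
From HB Require Import structures.
From mathcomp Require Import all_boot all_algebra.
From mathcomp Require Import boolp classical_sets.
From Stdlib Require Import Lia.
From mathcomp Require Import zify.
From Stdlib Require Import Relations.
Set Implicit Arguments. Unset Strict Implicit. Unset Printing Implicit Defensive.
Import GRing.Theory.
Local Open Scope ring_scope.

Lemma ex_min_nat (P : nat -> Prop) :
  (exists n, P n) -> exists n, P n /\ forall m, P m -> (n <= m)%N.
Proof.
case=> n; elim: n {-2}n (leqnn n) => [|N IH] n hn Pn.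
  exists n; split=> // m _; move: hn; rewrite leqn0 => /eqP->; done.
case: (pselect (exists m, P m /\ (m < n)%N)) => [[m [Pm lt]]|nex].
  apply: (IH m) => //; rewrite -ltnS; exact: leq_trans lt hn.
exists n; split=> // m Pm; rewrite leqNgt; apply/negP => lt; apply: nex; by exists m.
Qed.

Lemma ex_max_nat (P : nat -> Prop) b :
  (exists n, P n) -> (forall n, P n -> (n <= b)%N) ->
  exists n, P n /\ forall m, P m -> (m <= n)%N.
Proof.
move=> [n Pn] hb.
have [j [[n' [Pn' ->]] hj]] := @ex_min_nat (fun j => exists n, P n /\ j = (b - n)%N)
   (ex_intro _ _ (ex_intro _ n (conj Pn erefl))).
exists n'; split=> // m Pm; have := hj (b - m)%N (ex_intro _ m (conj Pm erefl)).
have := hb _ Pm; have := hb _ Pn'; lia.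
Qed.

Section Sp.
Variables (k : fieldType) (d : nat).
Definition subsp (P : 'rV[k]_d -> Prop) :=
  P 0 /\ (forall v w, P v -> P w -> P (v + w)) /\ (forall c v, P v -> P (c *: v)).

Lemma subsp_sum P (I : Type) (r : seq I) (F : I -> 'rV_d) :
  subsp P -> (forall i, P (F i)) -> P (\sum_(i <- r) F i).
Proof.
move=> [P0 [PD PZ]] PF; elim: r => [|a r IH]; first by rewrite big_nil.
by rewrite big_cons; apply: PD.
Qed.

Lemma subsp_mx P m (U : 'M_(m, d)) v :
  subsp P -> (forall i, P (row i U)) -> (v <= U)%MS -> P v.
Proof.
move=> sP hU /submxP [w ->]; rewrite mulmx_sum_row; apply: subsp_sum => // i.
by case: sP => [_ [_ PZ]]; apply: PZ.
Qed.

Lemma pred_mx P : subsp P -> exists U : 'M[k]_d, forall v, P v <-> (v <= U)%MS.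
Proof.
move=> sP.
pose Q n := exists m (U : 'M[k]_(m, d)), (forall i, P (row i U)) /\ \rank U = n.
have [n [[m [U [hU rU]]] hmax]] : exists n, Q n /\ forall n', Q n' -> (n' <= n)%N.
  apply: (@ex_max_nat Q d).
    exists 0%N, 0%N, (0 : 'M_(0, d)); split; first by case.
    by rewrite mxrank0.
  by move=> n' [m [U [_ <-]]]; apply: rank_leq_col.
have key : forall v, P v -> (v <= U)%MS.
  move=> v Pv; case: (boolP (v <= U)%MS) => // nv.
  have : Q (\rank (col_mx U v)).
    exists (m + 1)%N, (col_mx U v); split=> //.
    move=> i; rewrite -(splitK i); case: (split i) => [i1|i2] /=.
      by rewrite rowKu.
    rewrite rowKd; have -> : row i2 v = v by apply/rowP => j; rewrite mxE (ord1 i2).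
    done.
  move/hmax; rewrite -addsmxE -rU.
  have := mxrank_leqif_sup (addsmxSl U v).
  move=> /ltn_leqif; rewrite addsmx_sub submx_refl /=; rewrite (negbTE nv) /= => lt.
  by rewrite leqNgt lt.
exists <<U>>%MS => v; rewrite genmxE; split; first exact: key.
exact: subsp_mx.
Qed.

End Sp.

Section Rep.
Variables (k : fieldType) (G : algType k) (d : nat) (rho : G -> 'M[k]_d).
Hypothesis rhoD : forall x y, rho (x + y) = rho x + rho y.
Hypothesis rhoZ : forall (c : k) x, rho (c *: x) = c *: rho x.
Hypothesis rho1 : rho 1 = 1%:M.
Hypothesis rhoM : forall x y, rho (x * y) = rho y *m rho x.

Lemma rho0 : rho 0 = 0.
Proof. by rewrite -(scale0r (0 : G)) rhoZ scale0r. Qed.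

Lemma rhoN x : rho (- x) = - rho x.
Proof. by rewrite -scaleN1r rhoZ scaleN1r. Qed.

Lemma rhoB x y : rho (x - y) = rho x - rho y.
Proof. by rewrite rhoD rhoN. Qed.

Definition mxmod (U : 'M[k]_d) := forall x, (U *m rho x <= U)%MS.

End Rep.

Section Ideals.
Variables (k : fieldType) (G : algType k).
Implicit Types (I J : set G).

Lemma tsi0 I : two_sided_ideal I -> I 0.
Proof. by case. Qed.
Lemma tsiD I x y : two_sided_ideal I -> I x -> I y -> I (x + y).
Proof. by case=> _ [h _]; apply: h. Qed.
Lemma tsiN I x : two_sided_ideal I -> I x -> I (- x).
Proof. by case=> _ [_ [h _]]; apply: h. Qed.
Lemma tsiMl I g x : two_sided_ideal I -> I x -> I (g * x).
Proof. by case=> _ [_ [_ [h _]]]; apply: h. Qed.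
Lemma tsiMr I g x : two_sided_ideal I -> I x -> I (x * g).
Proof. by case=> _ [_ [_ [_ h]]]; apply: h. Qed.
Lemma tsiB I x y : two_sided_ideal I -> I x -> I y -> I (x - y).
Proof. by move=> tI Ix Iy; apply: tsiD => //; apply: tsiN. Qed.
Lemma tsiZ I (c : k) x : two_sided_ideal I -> I x -> I (c *: x).
Proof. by move=> tI Ix; rewrite -[x]mul1r scalerAl; apply: tsiMl. Qed.
Lemma tsi_sum I (T : Type) (r : seq T) (F : T -> G) :
  two_sided_ideal I -> (forall i, I (F i)) -> I (\sum_(i <- r) F i).
Proof.
move=> tI hF; elim: r => [|a r IH]; first by rewrite big_nil; apply: tsi0.
by rewrite big_cons; apply: tsiD.
Qed.
Lemma tsiT : two_sided_ideal (@setT G).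
Proof. by []. Qed.

End Ideals.

Section Rep2.
Variables (k : fieldType) (G : algType k) (d : nat) (rho : G -> 'M[k]_d).
Hypothesis rhoD : forall x y, rho (x + y) = rho x + rho y.
Hypothesis rhoZ : forall (c : k) x, rho (c *: x) = c *: rho x.
Hypothesis rho1 : rho 1 = 1%:M.
Hypothesis rhoM : forall x y, rho (x * y) = rho y *m rho x.

Local Notation mxmod := (mxmod rho).
Local Notation rho0 := (rho0 rhoZ).
Local Notation rhoN := (rhoN rhoZ).
Local Notation rhoB := (rhoB rhoD rhoZ).

Lemma rho_sum (I : Type) (r : seq I) (F : I -> G) :
  rho (\sum_(i <- r) F i) = \sum_(i <- r) rho (F i).
Proof.
elim: r => [|a r IH]; first by rewrite !big_nil rho0.
by rewrite !big_cons rhoD IH.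
Qed.

Definition simple_rel (L S : 'M[k]_d) :=
  [/\ mxmod L, mxmod S, (L <= S)%MS, ~~ (S <= L)%MS &
   forall U, mxmod U -> (L <= U)%MS -> (U <= S)%MS -> (U <= L)%MS \/ (S <= U)%MS].

Definition annS (L S : 'M[k]_d) : set G := fun x => (S *m rho x <= L)%MS.

Lemma simple_dich L S (P : 'rV[k]_d -> Prop) : simple_rel L S -> subsp P ->
  (forall v g, P v -> P (v *m rho g)) ->
  (forall v, (v <= L)%MS -> P v) -> (forall v, P v -> (v <= S)%MS) ->
  (forall v, P v -> (v <= L)%MS) \/ (forall v, (v <= S)%MS -> P v).
Proof.
case=> mL mS LS nSL hs sP Pg PL PS.
have [U hU] := pred_mx sP.
have mU : mxmod U.
  move=> x; apply/row_subP => i; rewrite row_mul; apply/hU; apply: Pg; apply/hU.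
  exact: row_sub.
have LU : (L <= U)%MS by apply/rV_subP => v /PL /hU.
have US : (U <= S)%MS by apply/rV_subP => v /hU /PS.
case: (hs U mU LU US) => [UL|SU].
  by left => v /hU vU; exact: submx_trans vU UL.
by right => v vS; apply/hU; exact: submx_trans vS SU.
Qed.

Lemma exists_simple L X : mxmod L -> mxmod X -> (L <= X)%MS -> ~~ (X <= L)%MS ->
  exists S, simple_rel L S /\ (S <= X)%MS.
Proof.
move=> mL mX LX nXL.
pose Q n := exists S, [/\ mxmod S, (L <= S)%MS, (S <= X)%MS, ~~ (S <= L)%MS & \rank S = n].
have [n [[S [mS LS SX nSL rS]] hmin]] :=
  ex_min_nat (ex_intro Q _ (ex_intro _ X (And5 mX LX (submx_refl X) nXL erefl))).
exists S; split=> //; split=> // U mU LU US.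
case: (boolP (U <= L)%MS) => [UL|nUL]; [by left|right].
have := hmin (\rank U) (ex_intro _ U (And5 mU LU (submx_trans US SX) nUL erefl)).
by rewrite -rS -(geq_leqif (mxrank_leqif_sup US)).
Qed.

Lemma annS_tsi L S : mxmod L -> mxmod S -> two_sided_ideal (annS L S).
Proof.
move=> mL mS; rewrite /annS; split; first by rewrite rho0 mulmx0 sub0mx.
split; first by move=> x y hx hy; rewrite rhoD mulmxDr addmx_sub.
split; first by move=> x hx; rewrite rhoN mulmxN eqmx_opp.
split.
  move=> g x hx; rewrite rhoM mulmxA; apply: submx_trans (mL g).
  exact: submxMr.
move=> g x hx; rewrite rhoM mulmxA; apply: submx_trans hx.
exact: submxMr.
Qed.

Lemma mxvec_inj' m n : injective (@mxvec k m n).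
Proof. by move=> A B /(congr1 vec_mx); rewrite !mxvecK. Qed.

Lemma ker_fin_codim (I : set G) : (forall x, rho x = 0 -> I x) ->
  two_sided_ideal I -> fin_codim I.
Proof.
move=> hI tI.
pose P (v : 'rV[k]_(d * d)) := exists g, v = mxvec (rho g).
have sP : subsp P.
  split; first by exists 0; rewrite rho0 linear0.
  split; first by move=> v w [g ->] [h ->]; exists (g + h); rewrite rhoD linearD.
  by move=> c v [g ->]; exists (c *: g); rewrite rhoZ linearZ.
have [U hU] := pred_mx sP.
have : forall i, exists g, row i U = mxvec (rho g) by move=> i; apply/hU; exact: row_sub.
move=> /(@choice _ _ (fun i g => row i U = mxvec (rho g))) [e he].
exists (d * d)%N, e => x.
have : (mxvec (rho x) <= U)%MS by apply/hU; exists x.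
case/submxP => w hw; exists (fun i => w 0 i).
apply: hI; rewrite rhoB rho_sum; apply/eqP; rewrite subr_eq0; apply/eqP.
apply: mxvec_inj'; rewrite hw mulmx_sum_row linear_sum; apply: eq_bigr => i _.
by rewrite he rhoZ linearZ.
Qed.


Lemma zmod_id4 (V : zmodType) (a b c s : V) : a + b - c - s = (a - s) - (c - b).
Proof. by rewrite [LHS]addrAC [a + b - s]addrAC opprB addrA. Qed.

Lemma fix_id (s : 'rV[k]_d) kap mu :
  s *m rho (kap + mu - mu * kap) - s = (s *m rho kap - s) - (s *m rho kap - s) *m rho mu.
Proof.
rewrite rhoB rhoD rhoM mulmxBr mulmxDr mulmxBl mulmxA.
by rewrite zmod_id4.
Qed.

Lemma annS_max L S : simple_rel L S -> maximal_ideal (annS L S).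
Proof.
move=> hs; have [mL mS LS nSL hsimp] := hs.
have mSv : forall (w : 'rV[k]_d) g, (w <= S)%MS -> (w *m rho g <= S)%MS.
  by move=> w g wS; exact: submx_trans (submxMr _ wS) (mS g).
split; first exact: annS_tsi.
split.
  move=> eT; have : annS L S 1 by rewrite eT.
  by rewrite /annS rho1 mulmx1 => SL; rewrite SL in nSL.
move=> K tK sub.
case: (pselect (K `<=` annS L S)%classic) => [KI|nKI].
  by left; apply/seteqP; split.
right.
have [k0 [Kk0 nk0]] : exists k0, K k0 /\ ~ annS L S k0.
  apply: contrapT => h; apply: nKI => x Kx; apply: contrapT => nx; apply: h.
  by exists x.
have ZL : forall z : 'rV[k]_d, (z <= S)%MS -> (forall y, K y -> (z *m rho y <= L)%MS) -> (z <= L)%MS.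
  pose P (z : 'rV[k]_d) := (z <= S)%MS /\ forall y, K y -> (z *m rho y <= L)%MS.
  have [h|h] : (forall v, P v -> (v <= L)%MS) \/ (forall v, (v <= S)%MS -> P v).
    apply: (@simple_dich L S P hs).
    - split; first by split; [exact: sub0mx | move=> y _; rewrite mul0mx sub0mx].
      split.
        move=> v w [vS vK] [wS wK]; split; first exact: addmx_sub.
        by move=> y Ky; rewrite mulmxDl addmx_sub ?vK ?wK.
      move=> c v [vS vK]; split; first exact: scalemx_sub.
      by move=> y Ky; rewrite -scalemxAl scalemx_sub ?vK.
    - move=> v g [vS vK]; split; first exact: submx_trans (submxMr _ vS) (mS g).
      move=> y Ky; rewrite -mulmxA -rhoM; apply: vK; exact: tsiMr.
    - move=> v vL; split; first exact: submx_trans vL LS.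
      move=> y Ky; exact: submx_trans (submxMr _ vL) (mL y).
    - by move=> v [].
  - by move=> z zS zK; apply: h.
  - exfalso; apply: nk0; rewrite /annS; apply/row_subP => i; rewrite row_mul.
    by have [_ ] := h (row i S) (row_sub _ _); apply.
have step : forall j, (j <= d)%N -> exists kap, K kap /\
    forall i : 'I_d, (i < j)%N -> (row i S *m rho kap - row i S <= L)%MS.
  elim => [|j IH] hj.
    by exists 0; split; [exact: tsi0|].
  have [kap [Kk hk]] := IH (ltnW hj).
  set t := row (Ordinal hj) S.
  set t' := t - t *m rho kap.
  have t'S : (t' <= S)%MS.
    by rewrite addmx_sub ?eqmx_opp ?row_sub // (submx_trans (submxMr _ (row_sub _ _)) (mS _)).
  suff [mu [Kmu hmu]] : exists mu, K mu /\ (t' - t' *m rho mu <= L)%MS.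
    exists (kap + mu - mu * kap); split.
      by apply: tsiB => //; [apply: tsiD | apply: tsiMr].
    move=> i; rewrite ltnS leq_eqVlt => /orP [/eqP eij | lt].
      have -> : i = Ordinal hj by apply: val_inj.
      rewrite fix_id -/t; have -> : t *m rho kap - t = - t' by rewrite opprB.
      by rewrite mulNmx opprK addrC -opprB eqmx_opp.
    rewrite fix_id addmx_sub ?eqmx_opp ?hk //.
    exact: submx_trans (submxMr _ (hk _ lt)) (mL _).
  pose Lam y := K y /\ forall i : 'I_d, (i < j)%N -> (row i S *m rho y <= L)%MS.
  have LamD : forall y z, Lam y -> Lam z -> Lam (y + z).
    move=> y z [Ky hy] [Kz hz]; split; first exact: tsiD.
    by move=> i li; rewrite rhoD mulmxDr addmx_sub ?hy ?hz.
  pose P (w : 'rV[k]_d) := (w <= S)%MS /\ exists y, Lam y /\ (w - t' *m rho y <= L)%MS.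
  have [h|h] : (forall v, P v -> (v <= L)%MS) \/ (forall v, (v <= S)%MS -> P v).
    apply: (@simple_dich L S P hs).
    - split.
        split; first exact: sub0mx.
        exists 0; split; last by rewrite rho0 mulmx0 subr0 sub0mx.
        by split; [exact: tsi0 | move=> i _; rewrite rho0 mulmx0 sub0mx].
      split.
        move=> v w [vS [y [Ly hy]]] [wS [z [Lz hz]]]; split; first exact: addmx_sub.
        exists (y + z); split; first exact: LamD.
        by rewrite rhoD mulmxDr opprD addrACA addmx_sub.
      move=> c v [vS [y [[Ky hy] hv]]]; split; first exact: scalemx_sub.
      exists (c *: y); split.
        split; first exact: tsiZ.
        by move=> i li; rewrite rhoZ -scalemxAr scalemx_sub ?hy.
      by rewrite rhoZ -scalemxAr -scalerBr scalemx_sub.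
    - move=> v g [vS [y [[Ky hy] hv]]]; split; first exact: submx_trans (submxMr _ vS) (mS g).
      exists (g * y); split.
        split; first exact: tsiMl.
        by move=> i li; rewrite rhoM mulmxA (submx_trans (submxMr _ (hy _ li)) (mL _)).
      rewrite rhoM mulmxA -mulmxBl; exact: submx_trans (submxMr _ hv) (mL _).
    - move=> v vL; split; first exact: submx_trans vL LS.
      exists 0; split; last by rewrite rho0 mulmx0 subr0.
      by split; [exact: tsi0 | move=> i _; rewrite rho0 mulmx0 sub0mx].
    - by move=> v [].
  - exists kap; split => //.
    apply: ZL.
      by rewrite addmx_sub ?eqmx_opp ?mSv.
    move=> y Ky.
    have Lyk : Lam (y - y * kap).
      split; first by apply: tsiB => //; apply: tsiMr.
      move=> i li; rewrite rhoB rhoM mulmxBr mulmxA -mulmxBl.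
      apply: submx_trans (submxMr _ _) (mL _).
      by rewrite -opprB eqmx_opp hk.
    have := h (t' *m rho (y - y * kap)).
    rewrite rhoB rhoM mulmxBr mulmxA -mulmxBl; apply; split.
      by apply: (mSv); rewrite addmx_sub // eqmx_opp; apply: (mSv).
    exists (y - y * kap); split => //.
    by rewrite rhoB rhoM mulmxBr mulmxA mulmxBl subrr sub0mx.
  - have [_ [y [Ly hy]]] := h t' t'S.
    by exists y; split => //; case: Ly.
have [kap [Kk hk]] := step d (leqnn d).
have h1k : K (1 - kap).
  apply: sub; rewrite /annS rhoB rho1 mulmxBr mulmx1.
  apply/row_subP => i; rewrite linearB /= row_mul -opprB eqmx_opp; exact: hk.
have K1 : K 1 by rewrite -(subrK kap 1); apply: tsiD.
by apply/seteqP; split => // x _; rewrite -[x]mulr1; apply: tsiMl.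
Qed.

Lemma annS_cfs L S : simple_rel L S -> cfs (annS L S).
Proof.
move=> hs; split; first exact: annS_max.
have [mL mS _ _ _] := hs.
apply: ker_fin_codim => //; last exact: annS_tsi.
by move=> x hx; rewrite /annS hx mulmx0 sub0mx.
Qed.

End Rep2.

Section SqCoord.
Variables (k : fieldType) (d : nat) (L X : 'M[k]_d).
Hypothesis LX : (L <= X)%MS.

Definition sqW := (X :\: L)%MS.
Definition sqr := \rank sqW.
Definition sqB : 'M[k]_(sqr, d) := row_base sqW.
Definition sqM : 'M[k]_(d, sqr) := proj_mx sqW L *m pinvmx sqB.
Definition inq (w : 'rV[k]_d) : 'rV[k]_sqr := w *m sqM.
Definition valq (c : 'rV[k]_sqr) : 'rV[k]_d := c *m sqB.

Lemma capWL : (sqW :&: L)%MS = 0.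
Proof. exact: capmx_diff. Qed.

Lemma XWL : (X <= sqW + L)%MS.
Proof.
rewrite -{1}(addsmx_diff_cap_eq X L); apply: addsmxS => //; exact: capmxSr.
Qed.

Lemma valq_sub c : (valq c <= X)%MS.
Proof. by rewrite /valq (submx_trans (submxMl _ _)) // eq_row_base diffmxSl. Qed.

Lemma inq_valq c : inq (valq c) = c.
Proof.
rewrite /inq /valq /sqM mulmxA proj_mx_id ?capWL //; last first.
  by rewrite (submx_trans (submxMl _ _)) // eq_row_base.
by rewrite mulmxKp // row_base_free.
Qed.

Lemma valq_inq w : (w <= X)%MS -> (valq (inq w) - w <= L)%MS.
Proof.
move=> wX; rewrite /inq /valq /sqM mulmxA mulmxKpV; last first.
  by rewrite eq_row_base proj_mx_sub.
rewrite -opprB eqmx_opp proj_mx_compl_sub //; exact: submx_trans wX XWL.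
Qed.

Lemma inqD w w' : inq (w + w') = inq w + inq w'.
Proof. by rewrite /inq mulmxDl. Qed.
Lemma inqB w w' : inq (w - w') = inq w - inq w'.
Proof. by rewrite /inq mulmxBl. Qed.
Lemma inqZ (a : k) w : inq (a *: w) = a *: inq w.
Proof. by rewrite /inq scalemxAl. Qed.
Lemma inq0 : inq 0 = 0.
Proof. by rewrite /inq mul0mx. Qed.
Lemma valqD c c' : valq (c + c') = valq c + valq c'.
Proof. by rewrite /valq mulmxDl. Qed.
Lemma valqB c c' : valq (c - c') = valq c - valq c'.
Proof. by rewrite /valq mulmxBl. Qed.
Lemma valqZ (a : k) c : valq (a *: c) = a *: valq c.
Proof. by rewrite /valq scalemxAl. Qed.
Lemma valq0 : valq 0 = 0.
Proof. by rewrite /valq mul0mx. Qed.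

Lemma inq_L w : (w <= L)%MS -> inq w = 0.
Proof. by move=> wL; rewrite /inq /sqM mulmxA proj_mx_0 ?capWL // mul0mx. Qed.

Lemma inq_eqL w w' : (w - w' <= L)%MS -> inq w = inq w'.
Proof. by move=> h; apply/eqP; rewrite -subr_eq0 -inqB inq_L. Qed.

Lemma inq_eq0 w : (w <= X)%MS -> inq w = 0 -> (w <= L)%MS.
Proof.
move=> wX h; have := valq_inq wX; rewrite h valq0 sub0r.
by rewrite eqmx_opp.
Qed.

End SqCoord.
Arguments inq {k d} L X w.
Arguments valq {k d} L X c.
Arguments sqr {k d} L X.

Section SqMod.
Variables (k : fieldType) (G : algType k) (d : nat) (rho : G -> 'M[k]_d).
Hypothesis rhoD : forall x y, rho (x + y) = rho x + rho y.
Hypothesis rhoZ : forall (c : k) x, rho (c *: x) = c *: rho x.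
Hypothesis rho1 : rho 1 = 1%:M.
Hypothesis rhoM : forall x y, rho (x * y) = rho y *m rho x.
Variables (L X : 'M[k]_d).
Hypothesis mL : mxmod rho L.
Hypothesis mX : mxmod rho X.
Hypothesis LX : (L <= X)%MS.

Definition actq x (c : 'rV[k]_(sqr L X)) := inq L X (valq L X c *m rho x).

Lemma inq_act w x : (w <= X)%MS -> inq L X (valq L X (inq L X w) *m rho x) = inq L X (w *m rho x).
Proof.
move=> wX; apply: inq_eqL => //; rewrite -mulmxBl.
exact: submx_trans (submxMr _ (valq_inq L wX)) (mL x).
Qed.

Lemma actq_addl x y c : actq (x + y) c = actq x c + actq y c.
Proof. by rewrite /actq rhoD mulmxDr inqD. Qed.
Lemma actq_addr x c c' : actq x (c + c') = actq x c + actq x c'.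
Proof. by rewrite /actq valqD mulmxDl inqD. Qed.
Lemma actq_scalel (a : k) x c : actq (a *: x) c = a *: actq x c.
Proof. by rewrite /actq rhoZ -scalemxAr inqZ. Qed.
Lemma actq_scaler (a : k) x c : actq x (a *: c) = a *: actq x c.
Proof. by rewrite /actq valqZ -scalemxAl inqZ. Qed.
Lemma actq1 c : actq 1 c = c.
Proof. by rewrite /actq rho1 mulmx1 inq_valq. Qed.
Lemma actqM x y c : actq (x * y) c = actq x (actq y c).
Proof.
rewrite /actq rhoM mulmxA inq_act //.
exact: submx_trans (submxMr _ (valq_sub _)) (mX y).
Qed.

Definition sq_gmod : gmod G :=
  @GMod k G 'rV[k]_(sqr L X) actq actq_addl actq_addr actq_scalel actq_scaler actq1 actqM.

Lemma sq_annih : annihilates (annS rho L X) sq_gmod.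
Proof.
move=> x c hx /=; rewrite /actq; apply: inq_L.
exact: submx_trans (submxMr _ (valq_sub _)) hx.
Qed.

Lemma sq_simple : simple_rel rho L X -> simple_module sq_gmod.
Proof.
move=> hs; have [_ _ _ nXL _] := hs.
split.
  have [i ni] := row_subPn nXL.
  exists (inq L X (row i X)) => h; move/negP: ni; apply.
  exact: (inq_eq0 (row_sub i X) h).
move=> N [N0 [ND [NZ Ng]]].
pose P (w : 'rV[k]_d) := (w <= X)%MS /\ exists c, N c /\ (w - valq L X c <= L)%MS.
have [h|h] : (forall v, P v -> (v <= L)%MS) \/ (forall v, (v <= X)%MS -> P v).
  apply: (simple_dich (P:=P) hs).
  - split.
      by split; [exact: sub0mx | exists 0; split => //; rewrite valq0 subr0 sub0mx].
    split.
      move=> v w [vX [c [Nc hc]]] [wX [c' [Nc' hc']]]; split; first exact: addmx_sub.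
      exists (c + c'); split; first exact: ND.
      by rewrite valqD opprD addrACA addmx_sub.
    move=> a v [vX [c [Nc hc]]]; split; first exact: scalemx_sub.
    exists (a *: c); split; first exact: NZ.
    by rewrite valqZ -scalerBr scalemx_sub.
  - move=> v g [vX [c [Nc hc]]]; split; first exact: submx_trans (submxMr _ vX) (mX g).
    exists (actq g c); split; first exact: (Ng g c).
    have -> : v *m rho g - valq L X (actq g c) =
       (v - valq L X c) *m rho g - (valq L X (actq g c) - valq L X c *m rho g).
      by rewrite mulmxBl opprB addrA subrK.
    rewrite addmx_sub // ?eqmx_opp; first exact: submx_trans (submxMr _ hc) (mL g).
    apply: valq_inq => //; exact: submx_trans (submxMr _ (valq_sub _)) (mX g).
  - move=> v vL; split; first exact: submx_trans vL LX.
    by exists 0; split => //; rewrite valq0 subr0.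
  - by move=> v [].
- left; apply/seteqP; split => c.
    move=> Nc; have vL : (valq L X c <= L)%MS.
      by apply: h; split; [exact: valq_sub | exists c; split => //; rewrite subrr sub0mx].
    by rewrite /= -(inq_valq c) (@inq_L _ _ L X _ vL).
  by move=> /= ->.
- right; apply/seteqP; split => // c _.
  have [_ [c' [Nc' hc']]] := h _ (valq_sub c).
  by move: (inq_eqL X hc'); rewrite !inq_valq => ->.
Qed.

End SqMod.

Section Ext.
Variables (k : fieldType) (G : algType k) (d : nat) (rho : G -> 'M[k]_d).
Hypothesis rhoD : forall x y, rho (x + y) = rho x + rho y.
Hypothesis rhoZ : forall (c : k) x, rho (c *: x) = c *: rho x.
Hypothesis rho1 : rho 1 = 1%:M.
Hypothesis rhoM : forall x y, rho (x * y) = rho y *m rho x.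
Variables (L S T : 'M[k]_d).
Hypothesis mL : mxmod rho L.
Hypothesis mS : mxmod rho S.
Hypothesis mT : mxmod rho T.
Hypothesis LS : (L <= S)%MS.
Hypothesis ST : (S <= T)%MS.

Let gS := sq_gmod rhoD rhoZ rho1 rhoM mL mS.
Let gT := sq_gmod rhoD rhoZ rho1 rhoM mL mT.
Let gQ := sq_gmod rhoD rhoZ rho1 rhoM mS mT.

Let LT : (L <= T)%MS := submx_trans LS ST.

Lemma sub_mod (U : 'M[k]_d) (w : 'rV[k]_d) g : mxmod rho U -> (w <= U)%MS -> (w *m rho g <= U)%MS.
Proof. by move=> mU wU; exact: submx_trans (submxMr _ wU) (mU g). Qed.

Lemma vq_LT_S w : (w <= T)%MS -> (valq L T (inq L T w) - w <= S)%MS.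
Proof. by move=> wT; apply: submx_trans LS; apply: valq_inq. Qed.

Definition ext_i (c : gS) : gT := inq L T (valq L S c).
Definition ext_p (e : gT) : gQ := inq S T (valq L T e).

Lemma vLS_T (c : 'rV[k]_(sqr L S)) : (valq L S c <= T)%MS.
Proof. exact: submx_trans (valq_sub _) ST. Qed.

Lemma ext_i_hom : ghom ext_i.
Proof.
split; first by move=> v w; rewrite /ext_i valqD inqD.
split; first by move=> a v; rewrite /ext_i valqZ inqZ.
move=> x v; rewrite /ext_i /= /actq.
rewrite (@inq_act _ _ _ rho L T mL) ?vLS_T //.
apply: inq_eqL; apply: valq_inq; exact: sub_mod (valq_sub _).
Qed.

Lemma ext_p_hom : ghom ext_p.
Proof.
split; first by move=> v w; rewrite /ext_p valqD inqD.
split; first by move=> a v; rewrite /ext_p valqZ inqZ.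
move=> x v; rewrite /ext_p /= /actq.
rewrite (@inq_act _ _ _ rho S T mS) ?valq_sub //.
apply: inq_eqL; apply: vq_LT_S; exact: sub_mod (valq_sub _).
Qed.

Lemma ext_i_inj : injective ext_i.
Proof.
move=> c c' h; apply/eqP; rewrite -subr_eq0; apply/eqP.
have h0 : inq L T (valq L S (c - c')) = 0 by rewrite valqB inqB; move: h; rewrite /ext_i => ->; rewrite subrr.
have := inq_eq0 (vLS_T _) h0 => hL.
by rewrite -(inq_valq (c - c')) (@inq_L _ _ L S _ hL).
Qed.

Lemma ext_p_surj (s : gQ) : exists e, ext_p e = s.
Proof.
exists (inq L T (valq S T s)); rewrite /ext_p.
rewrite (@inq_eqL _ _ S T _ (valq S T s)) ?inq_valq //.
apply: vq_LT_S; exact: valq_sub.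
Qed.

Lemma ext_exact (e : gT) : ext_p e = 0 <-> exists t, ext_i t = e.
Proof.
split.
  move=> h; have wS := inq_eq0 (valq_sub _) h.
  exists (inq L S (valq L T e)); rewrite /ext_i.
  rewrite (@inq_eqL _ _ L T _ (valq L T e)) ?inq_valq //.
  exact: valq_inq.
move=> [t <-]; rewrite /ext_p /ext_i.
rewrite (@inq_eqL _ _ S T _ (valq L S t)); last by apply: vq_LT_S; exact: vLS_T.
by apply: inq_L; exact: valq_sub.
Qed.

Lemma ext_nonsplit :
  ~ (exists Y, [/\ mxmod rho Y, (L <= Y)%MS, (Y <= T)%MS, ((S :&: Y) <= L)%MS & (T <= S + Y)%MS]) ->
  ~ (exists sec : gQ -> gT, ghom sec /\ forall v, ext_p (sec v) = v).
Proof.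
move=> nY [sec [[secD [secZ secG]] hsec]]; apply: nY.
have sec0 : sec 0 = 0 by rewrite -(scale0r (0 : gQ)) secZ scale0r.
pose P (w : 'rV[k]_d) := (w <= T)%MS /\ exists v, (w - valq L T (sec v) <= L)%MS.
have sP : subsp P.
  split; first by split; [exact: sub0mx | exists 0; rewrite sec0 valq0 subr0 sub0mx].
  split.
    move=> v w [vT [a ha]] [wT [b hb]]; split; first exact: addmx_sub.
    by exists (a + b); rewrite secD valqD opprD addrACA addmx_sub.
  move=> c v [vT [a ha]]; split; first exact: scalemx_sub.
  by exists (c *: a); rewrite secZ valqZ -scalerBr scalemx_sub.
have [Y hY] := pred_mx sP.
have mY : mxmod rho Y.
  move=> x; apply/row_subP => i; rewrite row_mul; apply/hY.
  have [rT [a ha]] : P (row i Y) by apply/hY; exact: row_sub.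
  split; first exact: sub_mod.
  exists (gact x a); rewrite secG /= /actq.
  have -> : row i Y *m rho x - valq L T (inq L T (valq L T (sec a) *m rho x)) =
      (row i Y - valq L T (sec a)) *m rho x -
      (valq L T (inq L T (valq L T (sec a) *m rho x)) - valq L T (sec a) *m rho x).
    by rewrite mulmxBl opprB addrA subrK.
  rewrite addmx_sub ?eqmx_opp ?(sub_mod _ mL) //.
  apply: valq_inq; exact: sub_mod (valq_sub _).
exists Y; split => //.
- apply/rV_subP => v vL; apply/hY; split; first exact: submx_trans vL LT.
  by exists 0; rewrite sec0 valq0 subr0.
- by apply/rV_subP => v /hY [].
- apply/rV_subP => w; rewrite sub_capmx => /andP [wS /hY [wT [a ha]]].
  have e1 : inq S T w = 0 by apply: inq_L.
  have e2 : inq S T w = a.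
    rewrite -[RHS](hsec a) /ext_p; apply: inq_eqL.
    exact: submx_trans ha LS.
  move: ha; rewrite -e2 e1 sec0 valq0 subr0 //.
- apply/rV_subP => w wT.
  set a := inq S T w.
  have Pw' : P (valq L T (sec a)) by split; [exact: valq_sub | exists a; rewrite subrr sub0mx].
  have : inq S T (w - valq L T (sec a)) = 0.
    by rewrite inqB; have := hsec a; rewrite /ext_p => ->; rewrite subrr.
  move/(inq_eq0 (addmx_sub wT _)) => h.
  have wS : (w - valq L T (sec a) <= S)%MS by apply: h; rewrite eqmx_opp valq_sub.
  rewrite -(subrK (valq L T (sec a)) w); apply: addmx_sub_adds => //.
  exact/hY.
Qed.

Lemma ext_lemma :
  ~ (exists Y, [/\ mxmod rho Y, (L <= Y)%MS, (Y <= T)%MS, ((S :&: Y) <= L)%MS & (T <= S + Y)%MS]) ->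
  Ext1_nonzero gQ gS.
Proof.
move=> nY; exists gT, ext_i, ext_p; split; first exact: ext_i_hom.
split; first exact: ext_p_hom.
split; first exact: ext_i_inj.
split; first exact: ext_p_surj.
split; first exact: ext_exact.
exact: ext_nonsplit.
Qed.

End Ext.

Section Ideals2.
Variables (k : fieldType) (G : algType k).
Implicit Types (I J n a b : set G).
Local Notation TSI := (@two_sided_ideal k G).

Lemma all_in_impl (B B' : set (set G)) s : (forall a, B a -> B' a) -> all_in B s -> all_in B' s.
Proof. by move=> h; elim: s => //= a s IH [Ba Bs]; split; [apply: h | apply: IH]. Qed.

Lemma ideal_mul_tsi I J : two_sided_ideal I -> two_sided_ideal J -> two_sided_ideal (ideal_mul I J).
Proof.
move=> tI tJ; split.
  by exists 0%N, (fun=> 0), (fun=> 0); split; [case | rewrite big_ord0].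
split.
  move=> x y [n1 [x1 [y1 [h1 ->]]]] [n2 [x2 [y2 [h2 ->]]]].
  exists (n1 + n2)%N, (fun i => match split i with inl a => x1 a | inr b => x2 b end),
    (fun i => match split i with inl a => y1 a | inr b => y2 b end); split.
    by move=> i; case: (split i) => [a|b]; [apply: h1 | apply: h2].
  rewrite big_split_ord /=; congr (_ + _); apply: eq_bigr => i _.
    by rewrite (unsplitK (inl _ i)).
  by rewrite (unsplitK (inr _ i)).
split.
  move=> x [n1 [x1 [y1 [h1 ->]]]]; exists n1, (fun i => - x1 i), y1; split.
    by move=> i; have [hx hy] := h1 i; split => //; apply: tsiN.
  by rewrite -sumrN; apply: eq_bigr => i _; rewrite mulNr.
split.
  move=> g x [n1 [x1 [y1 [h1 ->]]]]; exists n1, (fun i => g * x1 i), y1; split.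
    by move=> i; have [hx hy] := h1 i; split => //; apply: tsiMl.
  by rewrite mulr_sumr; apply: eq_bigr => i _; rewrite mulrA.
move=> g x [n1 [x1 [y1 [h1 ->]]]]; exists n1, x1, (fun i => y1 i * g); split.
  by move=> i; have [hx hy] := h1 i; split => //; apply: tsiMr.
by rewrite mulr_suml; apply: eq_bigr => i _; rewrite mulrA.
Qed.

Lemma ideal_prod_tsi s : all_in TSI s -> two_sided_ideal (ideal_prod s).
Proof.
elim: s => [|a s IH] /=; first by move=> _; exact: tsiT.
by case=> ta ts; apply: ideal_mul_tsi => //; apply: IH.
Qed.

Lemma ideal_mul1 I J x y : I x -> J y -> ideal_mul I J (x * y).
Proof.
move=> Ix Jy; exists 1%N, (fun=> x), (fun=> y); split => //.
by rewrite big_ord1.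
Qed.

Lemma max_tsi n : maximal_ideal n -> two_sided_ideal n.
Proof. by case. Qed.

Lemma max_neqT n : maximal_ideal n -> n <> setT.
Proof. by case=> _ []. Qed.

Definition sumI I J : set G := fun z => exists x y, I x /\ J y /\ z = x + y.

Lemma sumI_tsi I J : two_sided_ideal I -> two_sided_ideal J -> two_sided_ideal (sumI I J).
Proof.
move=> tI tJ; split; first by exists 0, 0; rewrite addr0; split; [apply: tsi0|split; [apply: tsi0|]].
split.
  move=> x y [a [b [Ia [Jb ->]]]] [a' [b' [Ia' [Jb' ->]]]].
  by exists (a + a'), (b + b'); split; [apply: tsiD|split; [apply: tsiD|rewrite addrACA]].
split.
  move=> x [a [b [Ia [Jb ->]]]]; exists (- a), (- b).
  by split; [apply: tsiN|split; [apply: tsiN|rewrite opprD]].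
split.
  move=> g x [a [b [Ia [Jb ->]]]]; exists (g * a), (g * b).
  by split; [apply: tsiMl|split; [apply: tsiMl|rewrite mulrDr]].
move=> g x [a [b [Ia [Jb ->]]]]; exists (a * g), (b * g).
by split; [apply: tsiMr|split; [apply: tsiMr|rewrite mulrDl]].
Qed.

Lemma sumI_sym I J z : sumI I J z -> sumI J I z.
Proof. by move=> [a [b [Ia [Jb ->]]]]; exists b, a; rewrite addrC. Qed.

Lemma max_prime n I J : maximal_ideal n -> two_sided_ideal I -> two_sided_ideal J ->
  (ideal_mul I J `<=` n)%classic -> (I `<=` n)%classic \/ (J `<=` n)%classic.
Proof.
move=> [tn [nT hn]] tI tJ hIJ.
case: (pselect (I `<=` n)%classic) => [h|h]; [by left|right].
have [i0 [Ii0 ni0]] : exists i0, I i0 /\ ~ n i0.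
  apply: contrapT => hh; apply: h => x Ix; apply: contrapT => nx; apply: hh; by exists x.
have := hn (sumI I n) (sumI_tsi tI tn) (fun x nx => ex_intro _ 0 (ex_intro _ x
   (conj (tsi0 tI) (conj nx (esym (add0r x)))))).
case=> [e|e].
  exfalso; apply: ni0; rewrite -e; exists i0, 0; split => //; split; [exact: tsi0|].
  by rewrite addr0.
have : sumI I n 1 by rewrite e.
move=> [a [b [Ia [nb e1]]]] y Jy.
rewrite -[y]mul1r e1 mulrDl; apply: tsiD => //; last exact: tsiMr.
by apply: hIJ; apply: ideal_mul1.
Qed.

Lemma prod_prime n s : maximal_ideal n -> all_in TSI s ->
  (ideal_prod s `<=` n)%classic ->
  exists a, (forall B, all_in B s -> B a) /\ (a `<=` n)%classic.
Proof.
move=> mn; elim: s => [|a s IH] /=.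
  by move=> _ h; exfalso; apply: (max_neqT mn); apply/seteqP; split => // x _; apply: h.
case=> ta ts h.
case: (max_prime mn ta (ideal_prod_tsi ts) h) => [ha|hs].
  by exists a; split => // B [].
have [a' [h1 h2]] := IH ts hs; exists a'; split => // B [_ Bs]; exact: h1.
Qed.

Lemma max_eq a n : maximal_ideal a -> maximal_ideal n -> (a `<=` n)%classic -> a = n.
Proof.
move=> [ta [aT ha]] mn an; case: (ha n (max_tsi mn) an) => [->//|e].
by exfalso; apply: (max_neqT mn).
Qed.

Lemma max_comax a b : maximal_ideal a -> maximal_ideal b -> a <> b -> sumI a b 1.
Proof.
move=> ma mb nab.
have [ta [aT ha]] := ma.
case: (ha (sumI a b) (sumI_tsi ta (max_tsi mb))
   (fun x ax => ex_intro _ x (ex_intro _ 0 (conj ax (conj (tsi0 (max_tsi mb)) (esym (addr0 x))))))) => [e|->//].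
exfalso; apply: nab; symmetry; apply: max_eq => // x bx.
by rewrite -e; exists 0, x; split; [exact: tsi0|split => //; rewrite add0r].
Qed.

Lemma comax_mul I J J' : two_sided_ideal I -> two_sided_ideal J -> two_sided_ideal J' ->
  sumI I J 1 -> sumI I J' 1 -> sumI I (ideal_mul J J') 1.
Proof.
move=> tI tJ tJ' [i [j [Ii [Jj e]]]] [i' [j' [Ii' [Jj' e']]]].
exists (i * i' + i * j' + j * i'), (j * j'); split.
  exact: (tsiD tI (tsiD tI (tsiMr _ tI Ii) (tsiMr _ tI Ii)) (tsiMl _ tI Ii')).
split; first exact: ideal_mul1.
have -> : (1 : G) = (i + j) * (i' + j') by rewrite -e -e' mulr1.
by rewrite !mulrDl !mulrDr !addrA.
Qed.

Lemma comax_prod I s : two_sided_ideal I -> all_in TSI s ->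
  all_in (fun b => sumI I b 1) s -> sumI I (ideal_prod s) 1.
Proof.
move=> tI; elim: s => [|a s IH] /=.
  by move=> _ _; exists 0, 1; split; [exact: tsi0 | split => //; rewrite add0r].
case=> ta ts [ha hs]; apply: comax_mul => //; first exact: ideal_prod_tsi.
exact: IH.
Qed.

Lemma es_trans (x y z : set G) : ext_sim x y -> ext_sim y z -> ext_sim x z.
Proof. exact: rst_trans. Qed.
Lemma es_sym (x y : set G) : ext_sim x y -> ext_sim y x.
Proof. exact: rst_sym. Qed.
Lemma es_refl (x : set G) : ext_sim x x.
Proof. exact: rst_refl. Qed.
Lemma es_step (x y : set G) : ext_rel x y -> ext_sim x y.
Proof. exact: rst_step. Qed.

Definition eclass (m : set G) : set (set G) := fun n => cfs n /\ ext_sim m n.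

Lemma eclass_class (m : set G) : cfs m -> ext_class (eclass m) /\ eclass m m.
Proof. by move=> cm; split; [exists m | split => //; apply: es_refl]. Qed.

Lemma class_cfs (B : set (set G)) (x : set G) : ext_class B -> B x -> cfs x.
Proof. by move=> [m [_ ->]] []. Qed.

Lemma class_closed (B : set (set G)) (x y : set G) : ext_class B -> B x -> cfs y -> ext_sim x y -> B y.
Proof.
move=> [m [_ ->]] [_ hx] cy hxy; split => //; exact: es_trans hx hxy.
Qed.

Lemma class_eq (B B' : set (set G)) (x : set G) : ext_class B -> ext_class B' -> B x -> B' x -> B = B'.
Proof.
move=> [m [_ eB]] [m' [_ eB']]; rewrite eB eB' => [[_ hx]] [_ hx'].
apply/seteqP; split => y [cy hy]; split => //.
  exact: es_trans hx' (es_trans (es_sym hx) hy).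
exact: es_trans hx (es_trans (es_sym hx') hy).
Qed.

Lemma class_tsi (B : set (set G)) s : ext_class B -> all_in B s -> all_in TSI s.
Proof.
move=> cB; apply: all_in_impl => a Ba; apply: max_tsi; exact: (class_cfs cB Ba).1.
Qed.

End Ideals2.

Section Main.
Variables (k : fieldType) (G : algType k) (d : nat) (rho : G -> 'M[k]_d).
Hypothesis rhoD : forall x y, rho (x + y) = rho x + rho y.
Hypothesis rhoZ : forall (c : k) x, rho (c *: x) = c *: rho x.
Hypothesis rho1 : rho 1 = 1%:M.
Hypothesis rhoM : forall x y, rho (x * y) = rho y *m rho x.

Local Notation mxmod := (mxmod rho).
Local Notation annS := (annS rho).
Local Notation simple_rel := (simple_rel rho).

Lemma kill_mul (I J : set G) (u : 'rV[k]_d) (S L : 'M[k]_d) :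
  (forall y, J y -> (u *m rho y <= S)%MS) -> (forall a, I a -> (S *m rho a <= L)%MS) ->
  forall z, ideal_mul I J z -> (u *m rho z <= L)%MS.
Proof.
move=> hJ hI z [n [x [y [hxy ->]]]].
rewrite (rho_sum rhoD rhoZ) mulmx_sumr; apply: summx_sub => i _.
have [Ix Jy] := hxy i.
rewrite rhoM mulmxA; exact: submx_trans (submxMr _ (hJ _ Jy)) (hI _ Ix).
Qed.

Lemma sub_mod' (U : 'M[k]_d) (w : 'rV[k]_d) g : mxmod U -> (w <= U)%MS -> (w *m rho g <= U)%MS.
Proof. by move=> mU wU; exact: submx_trans (submxMr _ wU) (mU g). Qed.

Lemma mxmod_adds U V : mxmod U -> mxmod V -> mxmod (U + V)%MS.
Proof. by move=> mU mV x; rewrite addsmxMr addsmxS. Qed.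

Lemma mxmod_cap U V : mxmod U -> mxmod V -> mxmod (U :&: V)%MS.
Proof.
move=> mU mV x; apply: submx_trans (capmxMr _ _ _) _.
by apply: capmxS.
Qed.

Lemma simple_shift L S T' : simple_rel L S -> mxmod T' -> (L <= T')%MS ->
  ((S :&: T') <= L)%MS -> simple_rel T' (S + T')%MS.
Proof.
move=> [mL mS LS nSL hs] mT' LT' capL.
split => //; first exact: mxmod_adds.
- exact: addsmxSr.
- apply/negP => h; move/negP: nSL; apply; apply: submx_trans capL.
  by rewrite sub_capmx submx_refl (submx_trans (addsmxSl _ _) h).
move=> U mU T'U US.
have mU' : mxmod (U :&: S)%MS by apply: mxmod_cap.
have LU' : (L <= U :&: S)%MS by rewrite sub_capmx LS (submx_trans LT' T'U).
case: (hs _ mU' LU' (capmxSr _ _)) => [h|h].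
  left; apply/rV_subP => u uU.
  have := submx_trans uU US; case/sub_addsmxP => w hw.
  set u1 := w.1 *m S in hw; set u2 := w.2 *m T' in hw.
  have u2T : (u2 <= T')%MS by apply: submxMl.
  have u1U : (u1 <= U :&: S)%MS.
    rewrite sub_capmx submxMl andbT.
    have -> : u1 = u - u2 by rewrite hw addrK.
    by rewrite addmx_sub // eqmx_opp (submx_trans u2T T'U).
  by rewrite hw addmx_sub // (submx_trans (submx_trans u1U h) LT').
right; rewrite addsmx_sub T'U andbT.
exact: submx_trans h (capmxSl _ _).
Qed.

Lemma annS_shift L S T' : mxmod L -> mxmod S -> mxmod T' -> (L <= T')%MS ->
  ((S :&: T') <= L)%MS -> annS T' (S + T')%MS = annS L S.
Proof.
move=> mL mS mT' LT' capL; apply/seteqP; split => x; rewrite /annS /=.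
  move=> h; apply: submx_trans capL; rewrite sub_capmx (mS x) /=.
  exact: submx_trans (submxMr _ (addsmxSl _ _)) h.
move=> h; rewrite /annS addsmxMr addsmx_sub (mT' x) andbT.
exact: submx_trans h LT'.
Qed.

End Main.

Section Main2.
Variables (k : fieldType) (G : algType k) (d : nat) (rho : G -> 'M[k]_d).
Hypothesis rhoD : forall x y, rho (x + y) = rho x + rho y.
Hypothesis rhoZ : forall (c : k) x, rho (c *: x) = c *: rho x.
Hypothesis rho1 : rho 1 = 1%:M.
Hypothesis rhoM : forall x y, rho (x * y) = rho y *m rho x.

Local Notation mxmod := (mxmod rho).
Local Notation annS := (annS rho).
Local Notation simple_rel := (simple_rel rho).

Lemma split_lemma N : forall L S X (B : set (set G)) s,
  (\rank X - \rank S <= N)%N -> simple_rel L S -> mxmod X -> (S <= X)%MS ->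
  ext_class B -> all_in B s -> (forall x, ideal_prod s x -> (X *m rho x <= S)%MS) ->
  ~ B (annS L S) ->
  exists Y, [/\ mxmod Y, (L <= Y)%MS, (Y <= X)%MS, ((S :&: Y) <= L)%MS & (X <= S + Y)%MS].
Proof.
elim: N => [|N IH] L S X B s hN hs mX SX cB sB hP nB;
  (have [mL mS LS nSL hsimp] := hs);
  (case: (boolP (X <= S)%MS) => [XS|nXS];
   [exists L; split => //;
     [exact: submx_trans LS SX | by rewrite capmxSr | exact: submx_trans XS (addsmxSl _ _)] | ]).
  exfalso; move/negP: nXS; apply.
  rewrite -(geq_leqif (mxrank_leqif_sup SX)); move: hN; rewrite leqn0 subn_eq0 //.
have [T [hT TX]] := exists_simple mS mX SX nXS.
have [_ mT ST nTS _] := hT.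
pose n := annS S T.
have cn : cfs n := annS_cfs rhoD rhoZ rho1 rhoM hT.
have sn : (ideal_prod s `<=` n)%classic.
  move=> x Px; rewrite /n /annS; exact: submx_trans (submxMr _ TX) (hP x Px).
have [a [ha an]] := prod_prime cn.1 (class_tsi cB sB) sn.
have Ba := ha B sB.
have e : a = n := max_eq (class_cfs cB Ba).1 cn.1 an.
have Bn : B n by rewrite -e.
have cm : cfs (annS L S) := annS_cfs rhoD rhoZ rho1 rhoM hs.
case: (pselect (exists Y, [/\ mxmod Y, (L <= Y)%MS, (Y <= T)%MS, ((S :&: Y) <= L)%MS & (T <= S + Y)%MS]))
  => [[T' [mT' LT' T'T capT' TST']]|nsp]; last first.
  exfalso; apply: nB; apply: (class_closed cB Bn cm).
  apply: es_step; split => //; split => //.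
  exists (sq_gmod rhoD rhoZ rho1 rhoM mS mT), (sq_gmod rhoD rhoZ rho1 rhoM mL mS).
  split.
    split; first exact: (sq_simple rhoD rhoZ rho1 rhoM mS mT ST hT).
    by move=> x v hx; apply: sq_annih.
  split.
    split; first exact: (sq_simple rhoD rhoZ rho1 rhoM mL mS LS hs).
    by move=> x v hx; apply: sq_annih.
  exact: (ext_lemma rhoD rhoZ rho1 rhoM mL mS mT LS ST nsp).
have hs' := simple_shift hs mT' LT' capT'.
have eA := annS_shift mL mS mT' LT' capT'.
have lt : (\rank S < \rank (S + T')%MS)%N.
  have : (\rank S < \rank T)%N by rewrite (ltn_leqif (mxrank_leqif_sup ST)).
  by move/leq_trans; apply; apply: mxrankS.
have STX : (S + T' <= X)%MS by rewrite addsmx_sub SX (submx_trans T'T TX).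
have hN' : (\rank X - \rank (S + T')%MS <= N)%N by move: hN lt; lia.
have hP' : forall x, ideal_prod s x -> (X *m rho x <= S + T')%MS.
  by move=> x Px; apply: submx_trans (hP x Px) (addsmxSl _ _).
have nB' : ~ B (annS T' (S + T')%MS) by rewrite eA.
have [Z [mZ T'Z ZX capZ XZ]] := IH T' (S + T')%MS X B s hN' hs' mX STX cB sB hP' nB'.
exists Z; split => //.
- exact: submx_trans LT' T'Z.
- apply/rV_subP => v; rewrite sub_capmx => /andP [vS vZ].
  have : (v <= (S + T') :&: Z)%MS by rewrite sub_capmx (submx_trans vS (addsmxSl _ _)) vZ.
  move=> vv; have vT' := submx_trans vv capZ.
  by apply: submx_trans capT'; rewrite sub_capmx vS vT'.
- apply: submx_trans XZ _; rewrite -addsmxA; apply: addsmxS => //.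
  by rewrite addsmx_sub T'Z submx_refl.
Qed.


Definition killsW (L : 'M[k]_d) (B : set (set G)) (u : 'rV[k]_d) :=
  exists s, all_in B s /\ forall x, ideal_prod s x -> (u *m rho x <= L)%MS.

Definition CP (L X : 'M[k]_d) (p : set (set G) * 'rV[k]_d) :=
  ext_class p.1 /\ (p.2 <= X)%MS /\ killsW L p.1 p.2.

Lemma decomp N : forall L X, (\rank X - \rank L <= N)%N -> mxmod L -> mxmod X -> (L <= X)%MS ->
  forall v : 'rV[k]_d, (v <= X)%MS ->
  exists cs, List.Forall (CP L X) cs /\ (v - \sum_(p <- cs) p.2 <= L)%MS.
Proof.
elim: N => [|N IH] L X hN mL mX LX v vX;
  (case: (boolP (X <= L)%MS) => [XL|nXL];
   [exists [::]; split => //; rewrite big_nil subr0; exact: submx_trans vX XL | ]).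
  exfalso; move/negP: nXL; apply.
  rewrite -(geq_leqif (mxrank_leqif_sup LX)); move: hN; rewrite leqn0 subn_eq0 //.
have [S [hS SX]] := exists_simple mL mX LX nXL.
have [_ mS LS nSL _] := hS.
pose m := annS L S.
have cm : cfs m := annS_cfs rhoD rhoZ rho1 rhoM hS.
have [cB0 B0m] := eclass_class cm.
have lt : (\rank L < \rank S)%N by rewrite (ltn_leqif (mxrank_leqif_sup LS)).
have hN' : (\rank X - \rank S <= N)%N by move: hN lt; lia.
have [cs [Fcs hv]] := IH S X hN' mS mX SX v vX.
have [cs' [F' dcs]] : exists cs', List.Forall (CP L X) cs' /\
    ((\sum_(p <- cs) p.2) - \sum_(p <- cs') p.2 <= S)%MS.
  elim: cs Fcs {hv} => [|[B u] cs IHc] Fcs.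
    by exists [::]; split => //; rewrite !big_nil subr0 sub0mx.
  move: Fcs => /List.Forall_cons_iff [[cB [uX [s [sB hs]]]] Hcs] /=.
  have [cs' [F' d']] := IHc Hcs.
  have ts := ideal_prod_tsi (class_tsi cB sB).
  case: (pselect (B m)) => [Bm|nBm].
    exists ((B, u) :: cs'); split.
      constructor => //; split => //; split => //.
      exists (m :: s); split => //=.
      by apply: (kill_mul rhoD rhoZ rhoM (S := S)) => // y Py; apply: hs.
    by rewrite !big_cons /= opprD addrACA subrr add0r.
  pose P (w : 'rV[k]_d) := (w <= X)%MS /\ forall x, ideal_prod s x -> (w *m rho x <= S)%MS.
  have sP : subsp P.
    split; first by split; [exact: sub0mx | move=> x _; rewrite mul0mx sub0mx].
    split.
      move=> v1 v2 [h1 h1'] [h2 h2']; split; first exact: addmx_sub.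
      by move=> x Px; rewrite mulmxDl addmx_sub ?h1' ?h2'.
    move=> c w [h1 h1']; split; first exact: scalemx_sub.
    by move=> x Px; rewrite -scalemxAl scalemx_sub ?h1'.
  have [Xu hXu] := pred_mx sP.
  have mXu : mxmod Xu.
    move=> g; apply/row_subP => i; rewrite row_mul; apply/hXu.
    have [rX rP] : P (row i Xu) by apply/hXu; exact: row_sub.
    split; first exact: sub_mod' mX rX.
    by move=> x Px; rewrite -mulmxA -rhoM; apply: rP; apply: tsiMr.
  have SXu : (S <= Xu)%MS.
    apply/rV_subP => w wS; apply/hXu; split; first exact: submx_trans wS SX.
    by move=> x _; apply: sub_mod'.
  have uXu : (u <= Xu)%MS by apply/hXu.
  have hPu : forall x, ideal_prod s x -> (Xu *m rho x <= S)%MS.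
    move=> x Px; apply/row_subP => i; rewrite row_mul.
    have [_ rP] : P (row i Xu) by apply/hXu; exact: row_sub.
    exact: rP.
  have [Y [mY LY YXu capY XuSY]] :=
    split_lemma (leqnn _) hS mXu SXu cB sB hPu nBm.
  have := submx_trans uXu XuSY; case/sub_addsmxP => w hw.
  set a := w.1 *m S in hw; set y := w.2 *m Y in hw.
  have yY : (y <= Y)%MS by apply: submxMl.
  have yXu : (y <= Xu)%MS := submx_trans yY YXu.
  have [yX yP] : P y by apply/hXu.
  exists ((B, y) :: cs'); split.
    constructor => //; split => //; split => //.
    exists s; split => // x Px; apply: submx_trans capY.
    by rewrite sub_capmx yP // sub_mod'.
  rewrite !big_cons /= hw opprD addrACA addrK.
  rewrite addmx_sub //; exact: submxMl.
pose r := v - \sum_(p <- cs') p.2.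
have rS : (r <= S)%MS.
  have -> : r = (v - \sum_(p <- cs) p.2) + ((\sum_(p <- cs) p.2) - \sum_(p <- cs') p.2).
    by rewrite /r addrA subrK.
  exact: addmx_sub.
exists ((eclass m, r) :: cs'); split.
  constructor => //; split => //; split; first exact: submx_trans rS SX.
  exists [:: m]; split => //=.
  by apply: (kill_mul rhoD rhoZ rhoM (S := S)) => // y _; exact: sub_mod'.
by rewrite big_cons /= /r subrK subrr sub0mx.
Qed.

End Main2.

Section ASide.
Variables (k : fieldType) (G A : algType k) (f : {lrmorphism G -> A}) (N : set A).
Hypothesis N0 : N 0.
Hypothesis ND : forall x y, N x -> N y -> N (x + y).
Hypothesis NZ : forall (c : k) x, N x -> N (c *: x).
Hypothesis NM : forall a x, N x -> N (a * x).

Lemma NN x : N x -> N (- x).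
Proof. by move=> h; rewrite -scaleN1r; apply: NZ. Qed.
Lemma NB x y : N x -> N y -> N (x - y).
Proof. by move=> hx hy; apply: ND => //; apply: NN. Qed.
Lemma Nsum (I : Type) (r : seq I) (F : I -> A) : (forall i, N (F i)) -> N (\sum_(i <- r) F i).
Proof.
move=> h; elim: r => [|a r IH]; first by rewrite big_nil.
by rewrite big_cons; apply: ND.
Qed.
Lemma Ntrans x y z : N (x - y) -> N (y - z) -> N (x - z).
Proof. by move=> h1 h2; have := ND h1 h2; rewrite addrA subrK. Qed.

Variables (T : finType) (z : T -> A).

Definition vecz (c : 'rV[k]_#|T|) : A := \sum_(t : T) c 0 (enum_rank t) *: z t.

Lemma veczD c c' : vecz (c + c') = vecz c + vecz c'.
Proof. by rewrite /vecz -big_split; apply: eq_bigr => t _; rewrite mxE scalerDl. Qed.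
Lemma veczZ (a : k) c : vecz (a *: c) = a *: vecz c.
Proof. by rewrite /vecz scaler_sumr; apply: eq_bigr => t _; rewrite mxE scalerA. Qed.
Lemma veczN c : vecz (- c) = - vecz c.
Proof. by rewrite -scaleN1r veczZ scaleN1r. Qed.
Lemma veczB c c' : vecz (c - c') = vecz c - vecz c'.
Proof. by rewrite veczD veczN. Qed.
Lemma vecz_sum (I : Type) (r : seq I) (F : I -> 'rV[k]_#|T|) :
  vecz (\sum_(i <- r) F i) = \sum_(i <- r) vecz (F i).
Proof.
elim: r => [|a r IH]; last by rewrite !big_cons veczD IH.
by rewrite !big_nil /vecz big1 // => t _; rewrite mxE scale0r.
Qed.

Lemma make_rep (v : A) :
  (forall g t, exists c, N (f g * z t - vecz c)) ->
  (exists c, N (v - vecz c)) ->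
  exists d (rho : G -> 'M[k]_d) (vec : 'rV[k]_d -> A),
  [/\ (forall x y, rho (x + y) = rho x + rho y),
      (forall (c : k) x, rho (c *: x) = c *: rho x),
      rho 1 = 1%:M &
      (forall x y, rho (x * y) = rho y *m rho x)] /\
  [/\ (forall c c', vec (c + c') = vec c + vec c'),
      (forall (a : k) c, vec (a *: c) = a *: vec c),
      (forall g c, N (f g * vec c - vec (c *m rho g))) &
      exists c0, N (v - vec c0)].
Proof.
move=> Hg Hv.
pose P (c : 'rV[k]_#|T|) := N (vecz c).
have sP : subsp P.
  split; first by rewrite /P /vecz big1 // => t _; rewrite mxE scale0r.
  split; first by move=> a b ha hb; rewrite /P veczD; apply: ND.
  by move=> c a ha; rewrite /P veczZ; apply: NZ.
have [K hK] := pred_mx sP.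
pose X : 'M[k]_#|T| := 1%:M.
have KX : (K <= X)%MS by apply: submx1.
pose d := sqr K X.
pose vec (c : 'rV[k]_d) := vecz (valq K X c).
have vecD : forall c c', vec (c + c') = vec c + vec c' by move=> c c'; rewrite /vec valqD veczD.
have vecZ : forall (a : k) c, vec (a *: c) = a *: vec c by move=> a c; rewrite /vec valqZ veczZ.
have vecB : forall c c', vec (c - c') = vec c - vec c' by move=> c c'; rewrite /vec valqB veczB.
have indep : forall c, N (vec c) -> c = 0.
  move=> c hc; rewrite -(inq_valq c); apply: inq_L; exact/hK.
have uniq : forall y a b, N (y - vec a) -> N (y - vec b) -> a = b.
  move=> y a b ha hb; apply/eqP; rewrite -subr_eq0; apply/eqP; apply: indep.
  by rewrite vecB; have := NB hb ha; rewrite opprB addrC addrA subrK addrC.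
have tovec : forall w, N (vecz w - vec (inq K X w)).
  move=> w; rewrite /vec -veczB; apply/hK.
  by rewrite -opprB eqmx_opp; apply: valq_inq; apply: submx1.
have clos : forall g w, exists w', N (f g * vecz w - vecz w').
  move=> g w.
  have /(@choice _ _ (fun t c => N (f g * z t - vecz c))) [cg hcg] := Hg g.
  exists (\sum_(t : T) w 0 (enum_rank t) *: cg t).
  rewrite vecz_sum [vecz w]/vecz mulr_sumr -sumrB; apply: Nsum => t.
  rewrite -scalerAr veczZ -scalerBr; apply: NZ; exact: hcg.
have spec : forall g c, exists c', N (f g * vec c - vec c').
  move=> g c; have [w' hw'] := clos g (valq K X c).
  exists (inq K X w'); exact: Ntrans hw' (tovec w').
pose Tg g c := proj1_sig (cid (spec g c)).
have hTg : forall g c, N (f g * vec c - vec (Tg g c)) by move=> g c; exact: proj2_sig (cid (spec g c)).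
pose rho g : 'M[k]_d := \matrix_(i, j) (Tg g (delta_mx 0 i)) 0 j.
have rowrho : forall g i, row i (rho g) = Tg g (delta_mx 0 i).
  by move=> g i; apply/rowP => j; rewrite !mxE.
have key : forall g c, N (f g * vec c - vec (c *m rho g)).
  move=> g c; rewrite {1}(row_sum_delta c) mulmx_sum_row.
  have vsum : forall (F : 'I_d -> 'rV[k]_d), vec (\sum_i F i) = \sum_i vec (F i).
    by move=> F; rewrite /vec /valq mulmx_suml vecz_sum.
  rewrite !vsum mulr_sumr -sumrB; apply: Nsum => i.
  rewrite !vecZ rowrho -scalerAr -scalerBr; apply: NZ; exact: hTg.
have eqmx : forall (M M' : 'M[k]_d), (forall c : 'rV[k]_d, c *m M = c *m M') -> M = M'.
  by move=> M M' h; apply/row_matrixP => i; rewrite !rowE h.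
exists d, rho, vec; split; split => //.
- move=> x y; apply: eqmx => c; apply: (uniq (f (x + y) * vec c)); first exact: key.
  rewrite mulmxDr vecD rmorphD mulrDl opprD addrACA; apply: ND; exact: key.
- move=> a x; apply: eqmx => c; apply: (uniq (f (a *: x) * vec c)); first exact: key.
  rewrite -scalemxAr vecZ linearZ /= -scalerAl -scalerBr; apply: NZ; exact: key.
- apply: eqmx => c; apply: (uniq (f 1 * vec c)); first exact: key.
  by rewrite mulmx1 rmorph1 mul1r subrr.
- move=> x y; apply: eqmx => c; apply: (uniq (f (x * y) * vec c)); first exact: key.
  rewrite mulmxA rmorphM -mulrA.
  apply: (Ntrans (y := f x * vec (c *m rho y))); last exact: key.
  rewrite -mulrBr; apply: NM; exact: key.
- have [w hw] := Hv; exists (inq K X w); exact: Ntrans hw (tovec w).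
Qed.

End ASide.

Lemma Forall_nth' (T : Type) (P : T -> Prop) (x0 : T) (s : seq T) i :
  List.Forall P s -> (i < size s)%N -> P (nth x0 s i).
Proof.
elim: s i => [|a s IH] i //= /List.Forall_cons_iff [Pa Ps].
by case: i => [|i] //= lt; apply: IH.
Qed.

Section Final.
Variables (k : fieldType) (G A : algType k) (f : {lrmorphism G -> A}).

Lemma Aideal_props (m : set G) :
  let N := Aideal f m in
  [/\ N 0, (forall x y, N x -> N y -> N (x + y)),
      (forall (c : k) x, N x -> N (c *: x)) & (forall a x, N x -> N (a * x))].
Proof.
split.
- by exists 0%N, (fun=> 0), (fun=> 0); split; [case | rewrite big_ord0].
- move=> x y [n1 [a1 [x1 [h1 ->]]]] [n2 [a2 [x2 [h2 ->]]]].
  exists (n1 + n2)%N, (fun i => match split i with inl a => a1 a | inr b => a2 b end),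
    (fun i => match split i with inl a => x1 a | inr b => x2 b end); split.
    by move=> i; case: (split i) => [a|b]; [apply: h1 | apply: h2].
  rewrite big_split_ord /=; congr (_ + _); apply: eq_bigr => i _.
    by rewrite (unsplitK (inl _ i)).
  by rewrite (unsplitK (inr _ i)).
- move=> c x [n1 [a1 [x1 [h1 ->]]]]; exists n1, (fun i => c *: a1 i), x1; split => //.
  by rewrite scaler_sumr; apply: eq_bigr => i _; rewrite scalerAl.
- move=> b x [n1 [a1 [x1 [h1 ->]]]]; exists n1, (fun i => b * a1 i), x1; split => //.
  by rewrite mulr_sumr; apply: eq_bigr => i _; rewrite mulrA.
Qed.

Lemma Aideal_gen (m : set G) a x : m x -> Aideal f m (a * f x).
Proof. by move=> mx; exists 1%N, (fun=> a), (fun=> x); split => //; rewrite big_ord1. Qed.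

Lemma GaG_mul (v y : A) g h : GaG f v y -> GaG f v (f g * y * f h).
Proof.
move=> [n [g1 [h1 ->]]]; exists n, (fun i => g * g1 i), (fun i => h1 i * h).
rewrite mulr_sumr mulr_suml; apply: eq_bigr => i _.
by rewrite !rmorphM !mulrA.
Qed.

Lemma GaG_self (v : A) : GaG f v v.
Proof.
by exists 1%N, (fun=> 1), (fun=> 1); rewrite big_ord1 rmorph1 mulr1 mul1r.
Qed.

End Final.

Section Uniq.
Variables (k : fieldType) (G A : algType k) (f : {lrmorphism G -> A}) (N : set A).
Hypothesis N0 : N 0.
Hypothesis ND : forall x y, N x -> N y -> N (x + y).
Hypothesis NZ : forall (c : k) x, N x -> N (c *: x).
Hypothesis NM : forall a x, N x -> N (a * x).
Local Notation TSI := (@two_sided_ideal k G).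

Lemma uniq_part n (Bs : 'I_n -> set (set G)) (vs : 'I_n -> A) :
  (forall i, ext_class (Bs i) /\ quot_part f N (Bs i) (vs i)) ->
  (forall i j, i != j -> Bs i <> Bs j) -> N (\sum_i vs i) -> forall i, N (vs i).
Proof.
move=> hB hdist hsum i0.
have /(@choice _ _ (fun j s => all_in (Bs j) s /\ forall x, ideal_prod s x -> N (f x * vs j)))
  [sj hsj] : forall j, exists s, all_in (Bs j) s /\ forall x, ideal_prod s x -> N (f x * vs j).
  move=> j; have [_ [m' [[s [sB ->]] hm']]] := hB j; by exists s.
have cB : forall j, ext_class (Bs j) by move=> j; case: (hB j).
have tsj : forall j, all_in TSI (sj j) by move=> j; exact: class_tsi (cB j) (hsj j).1.
have comax : forall j, j != i0 -> sumI (ideal_prod (sj i0)) (ideal_prod (sj j)) 1.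
  move=> j nj; apply: comax_prod => //; first exact: ideal_prod_tsi.
  apply: (all_in_impl _ (hsj j).1) => b Bb.
  apply: sumI_sym; apply: comax_prod => //.
    by apply: max_tsi; exact: (class_cfs (cB j) Bb).1.
  apply: (all_in_impl _ (hsj i0).1) => a Ba.
  apply: max_comax; [exact: (class_cfs (cB j) Bb).1 | exact: (class_cfs (cB i0) Ba).1 |].
  move=> eab; apply: (hdist i0 j); first by rewrite eq_sym.
  by apply: (class_eq (cB i0) (cB j) Ba); rewrite -eab.
have /(@choice _ _ (fun j q => j != i0 -> ideal_prod (sj i0) (1 - q) /\ ideal_prod (sj j) q))
  [q hq] : forall j, exists q, j != i0 -> ideal_prod (sj i0) (1 - q) /\ ideal_prod (sj j) q.
  move=> j; case: (boolP (j != i0)) => nj; last by exists 0.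
  have [p [q' [hp [hq' e]]]] := comax j nj.
  by exists q' => _; split => //; rewrite e addrK.
have t0 := ideal_prod_tsi (tsj i0).
have prod_in : forall (r : seq 'I_n) j0, j0 \in r -> j0 != i0 ->
    ideal_prod (sj j0) (\prod_(j <- r | j != i0) q j).
  elim=> [|a r IH] j0 //; rewrite in_cons big_cons => /orP [/eqP -> nj0 | jr nj0].
    rewrite nj0; apply: tsiMr; first exact: ideal_prod_tsi.
    by case: (hq a nj0).
  case: (a != i0); last exact: IH.
  by apply: tsiMl; [exact: ideal_prod_tsi | exact: IH].
have prod_one : forall r : seq 'I_n, ideal_prod (sj i0) (1 - \prod_(j <- r | j != i0) q j).
  elim=> [|a r IH]; first by rewrite big_nil subrr; exact: tsi0.
  rewrite big_cons; case: (boolP (a != i0)) => na //.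
  have -> : 1 - q a * \prod_(j <- r | j != i0) q j =
      (1 - q a) + q a * (1 - \prod_(j <- r | j != i0) q j).
    by rewrite mulrBr mulr1 addrA subrK.
  by apply: tsiD => //; [case: (hq a na) | apply: tsiMl].
pose Q := \prod_(j <- index_enum 'I_n | j != i0) q j.
have -> : vs i0 = f (1 - Q) * vs i0 + f Q * vs i0.
  by rewrite -mulrDl rmorphB rmorph1 subrK mul1r.
apply: ND; first by apply: (hsj i0).2; exact: prod_one.
move: hsum; rewrite (bigD1 i0) //= => hsum.
have -> : f Q * vs i0 = f Q * (vs i0 + \sum_(j | j != i0) vs j) - f Q * \sum_(j | j != i0) vs j.
  by rewrite mulrDr addrK.
apply: NB => //; first exact: NM.
rewrite mulr_sumr big_mkcond /=; apply: Nsum => // j.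
case: ifP => nj //; apply: (hsj j).2; apply: prod_in => //.
exact: mem_index_enum.
Qed.

End Uniq.

Section Exist.
Variables (k : fieldType) (G A : algType k) (f : {lrmorphism G -> A}).

Lemma exist_part (m : set G) (B0 : set (set G)) : quasinoetherian G -> quasicentral f ->
  ext_class B0 -> W B0 m -> forall v, exists n (Bs : 'I_n -> set (set G)) (vs : 'I_n -> A),
      (forall i, ext_class (Bs i) /\ quot_part f (Aideal f m) (Bs i) (vs i)) /\
      Aideal f m (v - \sum_(i < n) vs i).
Proof.
move=> qn qc cB0 Wm v.
pose N := Aideal f m.
have [N0 ND NZ NM] := Aideal_props f m.
have [r [b hb]] := qn B0 m cB0 Wm.
have [_ [n1 [e [he hspan]]]] := qc v.
pose T := ('I_n1 * 'I_r)%type.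
pose z (t : T) := e t.1 * f (b t.2).
have span : forall y, GaG f v y -> exists c, N (y - vecz z c).
  move=> y /hspan [cc ->].
  have /(@choice _ _ (fun i (a : 'I_r -> k) => m (cc i - \sum_(l < r) a l *: b l))) [a ha] :=
    fun i => hb (cc i).
  exists (\row_j (a (enum_val j : T).1 (enum_val j : T).2)).
  have -> : vecz z (\row_j (a (enum_val j : T).1 (enum_val j : T).2)) =
      \sum_i \sum_l a i l *: (e i * f (b l)).
    rewrite /vecz [RHS]pair_big /=; apply: eq_bigr => -[i l] _ /=.
    by rewrite mxE enum_rankK.
  rewrite -sumrB; apply: (Nsum N0 ND) => i.
  have -> : \sum_l a i l *: (e i * f (b l)) = e i * f (\sum_(l < r) a i l *: b l).
    by rewrite linear_sum mulr_sumr; apply: eq_bigr => l _; rewrite linearZ /= scalerAr.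
  by rewrite -mulrBr -rmorphB; apply: Aideal_gen; exact: ha.
have Hg : forall g t, exists c, N (f g * z t - vecz z c).
  move=> g t; apply: span.
  have Hz : GaG f v (z t).
    by have := GaG_mul 1 (b t.2) (he t.1); rewrite rmorph1 mul1r.
  by have := GaG_mul g 1 Hz; rewrite rmorph1 mulr1.
have Hv : exists c, N (v - vecz z c) by apply: span; exact: GaG_self.
have [d [rho [vec [[rhoD rhoZ rho1 rhoM] [vecD vecZ key [c0 hc0]]]]]] :=
  make_rep N0 ND NZ NM Hg Hv.
have m0 : mxmod rho (0 : 'M[k]_d) by move=> x; rewrite mul0mx.
have m1 : mxmod rho (1%:M : 'M[k]_d) by move=> x; exact: submx1.
have [cs [Fcs hcs]] := decomp rhoD rhoZ rho1 rhoM (leq_subr _ _) m0 m1 (sub0mx _ _) (submx1 c0).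
have vec0 : vec 0 = 0 by rewrite -(scale0r (0 : 'rV[k]_d)) vecZ scale0r.
have vsum : forall (I : Type) (rr : seq I) (F : I -> 'rV[k]_d), vec (\sum_(i <- rr) F i) = \sum_(i <- rr) vec (F i).
  by move=> I rr F; elim: rr => [|a rr IH]; rewrite ?big_nil ?vec0 // !big_cons vecD IH.
pose x0 : set (set G) * 'rV[k]_d := (set0, 0).
exists (size cs), (fun i => (nth x0 cs i).1), (fun i => vec (nth x0 cs i).2); split.
  move=> i; have [cBi [_ [s [sB hs]]]] := Forall_nth' x0 Fcs (ltn_ord i).
  split => //; exists (ideal_prod s); split; first by exists s.
  move=> x Px; have := key x (nth x0 cs i).2.
  by rewrite (submx0null (hs x Px)) vec0 subr0.
have e0 : c0 = \sum_(p <- cs) p.2.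
  by apply/eqP; rewrite -subr_eq0; apply/eqP; apply: submx0null hcs.
move: hc0; rewrite e0 vsum (big_nth x0) big_mkord //.
Qed.

End Exist.

Theorem mainTheorem12 (k : fieldType) (G A : algType k)
  (f : {lrmorphism G -> A}) (f_inj : injective f) :
  quasinoetherian G -> quasicentral f -> HC_block_subalgebra f.
Proof.
move=> qn qc B m cB Wm; split.
  by move=> v; exact: (exist_part qn qc cB Wm v).
have [N0 ND NZ NM] := Aideal_props f m.
exact: uniq_part.
Qed.
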